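(* Let $p$ be a prime and let $A$ be a Henselian valuation ring which is not a field, with field of fractions $K$, maximal ideal $\mathfrak{m}_A$, residue field $k$ and valuation $v_A$, where $\operatorname{char}K=\operatorname{char}k=p$. Let $L/K$ be a non-trivial Artin–Schreier extension. Then any $f\in K$ generating $L/K$ that satisfies one of the following properties is best: (i) $f\notin A$ and $p\nmid v_A(f)$; (ii) $f\notin A$ and $f=ug^{-p}$ for some $0\neq g\in\mathfrak{m}_A$ and $u\in A^\times$ whose residue class is not a $p$-th power in $k$; (iii) $f\in A^\times$ and $\bar f\notin\{x^p-x\mid x\in k\}$.
   Context: An element $f\in K$ generates $L/K$ if $L=K(\alpha)$ for a root $\alpha$ of $T^p-T=f$. Any two generators $f,f'$ satisfy $f'=i(f+h^p-h)$ for some $h\in K$, $1\le i\le p-1$. A generator $f$ is best if $v_A(f)\ge v_A(f')$ for every generator $f'$ of $L/K$, i.e. $v_A(1/f)=\inf_{h\in K,1\le i\le p-1}v_A(1/(i(f+h^p-h)))$. *)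

(* Defs.v *)
From HB Require Import structures.
From mathcomp Require Import all_boot all_order all_algebra all_field.
Set Implicit Arguments. Unset Strict Implicit. Unset Printing Implicit Defensive.
Import GRing.Theory.
Local Open Scope ring_scope.

Section Val.
Variable K : fieldType.
Variable A : {pred K}.

Definition is_valuation_ring : Prop :=
  [/\ 0 \in A, 1 \in A,
      (forall x y, x \in A -> y \in A -> x - y \in A),
      (forall x y, x \in A -> y \in A -> x * y \in A) &
      (forall x, x != 0 -> x \in A \/ x^-1 \in A)].

Definition unitA (x : K) : Prop := [/\ x \in A, x != 0 & x^-1 \in A].

Definition maxideal (x : K) : Prop := x \in A /\ ~ unitA x.

(* congruence modulo m_A: equality of residue classes in k = A/m_A *)
Definition res_eq (x y : K) : Prop := x \in A /\ y \in A /\ maxideal (x - y).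

Definition not_field : Prop := exists x, x != 0 /\ maxideal x.

Definition henselian : Prop :=
  forall (P : {poly K}), P \is monic -> (forall i, P`_i \in A) ->
  forall a, a \in A -> maxideal P.[a] -> unitA (P^`()).[a] ->
  exists b, [/\ b \in A, P.[b] = 0 & maxideal (b - a)].

(* v_A(x) <= v_A(y), with v_A(0) = +oo; v_A takes values in K^x/A^x *)
Definition vle (x y : K) : Prop := y = 0 \/ (x != 0 /\ y / x \in A).

(* p divides v_A(x) in the value group K^x/A^x (x <> 0) *)
Definition vdivisible (p : nat) (x : K) : Prop :=
  exists g : K, g != 0 /\ unitA (x / g ^+ p).
End Val.

Definition AS_generates (K : fieldType) (L : fieldExtType K) (p : nat) (f : K) : Prop :=
  exists alpha : L, alpha ^+ p - alpha = f%:A /\ (<<1%VS; alpha>>%VS = fullv).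

Definition AS_best (K : fieldType) (A : {pred K}) (L : fieldExtType K) (p : nat) (f : K) : Prop :=
  forall f' : K, AS_generates L p f' -> vle A f' f.

(* Main.v *)
Require Import Defs.
From HB Require Import structures.
From mathcomp Require Import all_boot all_order all_algebra all_field.
From mathcomp Require Import zify ring.
Set Implicit Arguments. Unset Strict Implicit. Unset Printing Implicit Defensive.
Import GRing.Theory.
Local Open Scope ring_scope.

Section Fp.
Variables (R : fieldType) (p : nat).
Hypothesis pR : p \in [pchar R].

Lemma natr_inj_lt (i j : nat) : (i < p)%N -> (j < p)%N -> i%:R = j%:R :> R -> i = j.
Proof.
move=> ip jp.
wlog le : i j ip jp / (i <= j)%N.
  move=> H E; case: (leqP i j) => [|/ltnW] h; first exact: H.
  by apply/esym/H.
move=> E; have: (j - i)%:R == 0 :> R by rewrite natrB // E subrr.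
rewrite -(dvdn_pcharf pR) => H.
case: (posnP (j - i)) => [|/(dvdn_leq)/(_ H)]; lia.
Qed.

Lemma Fp_roots (x : R) : x ^+ p = x -> exists i, (i < p)%N /\ x = i%:R.
Proof.
move=> Hx.
have p2 : (1 < p)%N by apply: prime_gt1; apply: pcharf_prime pR.
pose rs := [seq i%:R | i <- iota 0 p] : seq R.
have [xin|xnin] := boolP (x \in rs).
  move/mapP: xin => [i]; rewrite mem_iota add0n => /andP[_ ip] ->.
  by exists i.
pose P : {poly R} := 'X^p - 'X.
have sP : size P = p.+1.
  by rewrite /P size_polyDl size_polyXn // size_polyN size_polyX ltnS.
have P0 : P != 0 by rewrite -size_poly_eq0 sP.
have H := @max_poly_roots _ P (x :: rs) P0.
rewrite sP /= size_map size_iota ltnn in H.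
suff : false by []. apply: H.
  rewrite /= {1}/root /P !hornerE Hx subrr eqxx /=.
  apply/allP => _ /mapP[i _ ->]; rewrite /root !hornerE.
  by rewrite -(pFrobenius_autE pR) pFrobenius_aut_nat subrr.
rewrite /= xnin /= map_inj_in_uniq ?iota_uniq //.
move=> i j; rewrite !mem_iota !add0n => /andP[_ ip] /andP[_ jp].
exact: natr_inj_lt.
Qed.
End Fp.

Section Field.
Variables (K : fieldType) (L : fieldExtType K) (p : nat).
Hypothesis pK : p \in [pchar K].

Lemma pL : p \in [pchar L].
Proof. by rewrite (pchar_lalg L). Qed.

Lemma p2 : (1 < p)%N.
Proof. by apply: prime_gt1; apply: pcharf_prime pK. Qed.

Lemma frobD (x y : L) : (x + y) ^+ p = x ^+ p + y ^+ p.
Proof. by rewrite -!(pFrobenius_autE pL) pFrobenius_autD_comm //; apply: mulrC. Qed.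
Lemma frobB (x y : L) : (x - y) ^+ p = x ^+ p - y ^+ p.
Proof. by rewrite frobD -!(pFrobenius_autE pL) pFrobenius_autN. Qed.
Lemma frobn (i : nat) : (i%:R : L) ^+ p = i%:R.
Proof. by rewrite -!(pFrobenius_autE pL) pFrobenius_aut_nat. Qed.

Lemma nat_in1 (i : nat) : (i%:R : L) \in 1%VS.
Proof. by rewrite rpred_nat. Qed.

Variables (f : K) (a : L).
Hypothesis Ha : a ^+ p - a = f%:A.
Hypothesis Hgen : <<1%VS; a>>%VS = fullv.
Hypothesis Hdim : (1 < \dim (fullv : {vspace L}))%N.

Lemma a_notin1 : a \notin 1%VS.
Proof.
apply/negP => /Fadjoin_idP H; move: Hdim; rewrite -Hgen H dimv1 //.
Qed.

Lemma minPoly_a : size (minPoly 1 a) = p.+1 /\ forall i : nat, root (minPoly 1 a) (a + i%:R).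
Proof.
pose P : {poly L} := 'X^p - 'X - (f%:A)%:P.
have POver : P \is a polyOver 1%VS.
  by rewrite /P !rpredB ?rpredX ?polyOverX // polyOverC // rpredZ // mem1v.
pose r := [seq a + i%:R | i <- iota 0 p].
have sP : size P = p.+1.
  rewrite /P -addrA size_polyDl size_polyXn // -opprD size_polyN.
  by rewrite size_XaddC ltnS p2.
have rooti (i : nat) : root P (a + i%:R).
  rewrite /root /P !hornerE frobD frobn.
  by rewrite opprD addrACA subrr addr0 Ha subrr.
have Pprod : P = \prod_(z <- r) ('X - z%:P).
  rewrite [LHS](all_roots_prod_XsubC (rs := r)).
  - rewrite (_ : lead_coef P = 1) ?scale1r //.
    rewrite /P -addrA lead_coefDl ?lead_coefXn //.
    by rewrite -opprD size_polyN size_XaddC size_polyXn ltnS p2.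
  - by rewrite sP size_map size_iota.
  - by apply/allP => z /mapP[i _ ->].
  rewrite uniq_rootsE map_inj_in_uniq ?iota_uniq // => i j.
  rewrite !mem_iota !add0n => /andP[_ ip] /andP[_ jp] /addrI.
  exact: (natr_inj_lt pL).
have mdvd : minPoly 1 a %| P by apply: minPoly_dvdp => //; rewrite /root /P !hornerE Ha subrr.
have P0 : P != 0 by rewrite -size_poly_eq0 sP.
have sle := dvdp_leq P0 mdvd; rewrite sP in sle.
have mdvd0 := mdvd.
rewrite Pprod in mdvd.
have [m Hm] := dvdp_prod_XsubC mdvd.
set s := mask m r in Hm.
have Em : minPoly 1 a = \prod_(z <- s) ('X - z%:P).
  by apply/eqP; rewrite -eqp_monic ?monic_minPoly ?monic_prod_XsubC.
have sm : size (minPoly 1 a) = (size s).+1 by rewrite Em size_prod_XsubC.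
have dpos : (0 < size s)%N by move: sm; rewrite size_minPoly => [[<-]].
have c1 : (minPoly 1 a)`_(size s).-1 \in 1%VS := polyOverP (minPolyOver 1 a) _.
rewrite Em coefPn_prod_XsubC ?lt0n_neq0 // rpredN in c1.
have sumc (t : seq L) : \sum_(z <- t) a = a *+ size t.
  by elim: t => [|z t IH]; rewrite ?big_nil ?big_cons ?IH ?mulrS.
have inS : \sum_(z <- s) (z - a) \in 1%VS.
  rewrite big_seq; apply: rpred_sum => z /mem_mask /mapP[i _ ->].
  by rewrite addrAC subrr add0r nat_in1.
have ad : a *+ size s \in 1%VS.
  have -> : a *+ size s = \sum_(z <- s) z - \sum_(z <- s) (z - a).
    by rewrite -sumc -sumrB; apply: eq_bigr => z _; rewrite opprB addrC subrK.
  by rewrite rpredB.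
have pd : (p %| size s)%N.
  apply/negPn/negP => npd.
  have nz : (size s)%:R != 0 :> K by rewrite -(dvdn_pcharf pK).
  move: a_notin1; rewrite -(scale1r a) -(mulVf nz) -scalerA scaler_nat.
  by rewrite memvZ.
have sz : size (minPoly 1 a) = p.+1.
  have := dvdn_leq dpos pd; rewrite sm in sle *; lia.
split => // i.
have := dvdp_size_eqp mdvd0; rewrite sz sP eqxx => /esym/eqp_root ->.
exact: rooti.
Qed.

Definition sig := kHomExtend 1 \1 a (a + 1).

Lemma sig_hom : kHom 1 fullv sig.
Proof.
rewrite -Hgen; apply: kHomExtendP; first exact: subvv; first exact: kHom1.
rewrite lfun1_poly; exact: ((proj2 minPoly_a) 1%N).
Qed.

Lemma sig_a : sig a = a + 1.
Proof.
apply: (@kHomExtend_val _ _ 1%AS); first exact: kHom1.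
rewrite lfun1_poly; exact: ((proj2 minPoly_a) 1%N).
Qed.

Lemma sig_fix1 x : x \in 1%VS -> sig x = x.
Proof. by have [H _] := kHomP_tmp sig_hom; apply: H. Qed.

Lemma sigM x y : sig (x * y) = sig x * sig y.
Proof. by have [_ H] := kHomP_tmp sig_hom; apply: H; apply: memvf. Qed.

Lemma sigX x n : sig (x ^+ n) = sig x ^+ n.
Proof.
elim: n => [|n IH]; first by rewrite !expr0 sig_fix1 ?mem1v.
by rewrite !exprS sigM IH.
Qed.

Lemma sig_poly (q : {poly L}) y : q \is a polyOver 1%VS -> sig q.[y] = q.[sig y].
Proof.
move=> q1; rewrite (kHom_horner sig_hom) ?memvf //.
  by rewrite (kHom_poly_id sig_hom q1).
by apply/polyOverP => i; apply: memvf.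
Qed.

Lemma fixed_in1 x : sig x = x -> x \in 1%VS.
Proof.
move=> Hx.
pose q := Fadjoin_poly 1 a x.
have sq : (size q <= p)%N.
  have := size_Fadjoin_poly 1 a x; have [+ _] := minPoly_a.
  by rewrite size_minPoly => -[->].
have Hq (i : nat) : q.[a + i%:R] = x.
  elim: i => [|i IH]; first by rewrite addr0 Fadjoin_poly_eq // Hgen memvf.
  have -> : a + i.+1%:R = sig (a + i%:R).
    by rewrite raddfD /= sig_a sig_fix1 ?nat_in1 // -addrA [1 + _]addrC -mulrSr.
  by rewrite -sig_poly ?Fadjoin_polyOver // IH.
have [Q0|QN0] := eqVneq (q - x%:P) 0.
  move/eqP: Q0; rewrite subr_eq0 => /eqP Q0.
  have := polyOverP (Fadjoin_polyOver 1 a x) 0%N.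
  by rewrite -/q Q0 coefC.
have H := @max_poly_roots _ _ [seq a + i%:R | i <- iota 0 p] QN0.
have szQ : (size (q - x%:P)%R <= p)%N.
  apply: leq_trans (size_polyD _ _) _; rewrite geq_max sq size_polyN.
  by apply: leq_trans (size_polyC_leq1 _) _; apply: ltnW; apply: p2.
have r1 : all (root (q - x%:P)) [seq a + i%:R | i <- iota 0 p].
  apply/allP => _ /mapP[i _ ->]; by rewrite /root !hornerE Hq subrr.
suff r2 : uniq [seq a + i%:R | i <- iota 0 p].
  by have := leq_trans (H r1 r2) szQ; rewrite size_map size_iota ltnn.
rewrite map_inj_in_uniq ?iota_uniq // => i j.
rewrite !mem_iota !add0n => /andP[_ ip] /andP[_ jp] /addrI.
exact: (natr_inj_lt pL).
Qed.

Lemma AS_rel (f' : K) (b : L) : b ^+ p - b = f'%:A -> <<1%VS; b>>%VS = fullv ->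
  exists j : nat, exists h : K, [/\ (0 < j < p)%N & f' = j%:R * f + h ^+ p - h].
Proof.
move=> Hb Hgb.
have E : sig b ^+ p - sig b = b ^+ p - b.
  by rewrite -sigX -raddfB /= Hb sig_fix1 // rpredZ // mem1v.
have Hd : (sig b - b) ^+ p = sig b - b.
  move/eqP: E; rewrite -subr_eq0 => /eqP H0.
  apply/eqP; rewrite -subr_eq0 frobB; apply/eqP; rewrite -H0; ring.
have [j [jp Ej]] := Fp_roots pL Hd.
have sb : sig b = b + j%:R by rewrite -Ej addrC subrK.
have j0 : j != 0%N.
  apply/negP => /eqP j0; move: sb; rewrite j0 addr0 => /fixed_in1 /Fadjoin_idP H.
  by move: Hdim; rewrite -Hgb H dimv1.
set h := b - j%:R * a.
have sh : sig h = h.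
  rewrite /h raddfB /= sigM sig_fix1 ?nat_in1 // sig_a sb; ring.
have /vlineP [c Hc] : h \in <[1]>%VS by apply: fixed_in1.
exists j, c; split; first by rewrite lt0n j0 jp.
apply: (fmorph_inj (in_alg L)).
change (f'%:A = (j%:R * f + c ^+ p - c)%:A :> L).
rewrite -Hb -in_algE rmorphB rmorphD rmorphM rmorphXn rmorph_nat /= -Ha.
have -> : b = h + j%:R * a by rewrite /h subrK.
rewrite Hc frobD exprMn frobn; ring.
Qed.
End Field.

Section Valuation.
Variables (K : fieldType) (A : {pred K}).
Hypothesis V : is_valuation_ring A.

Lemma A0 : 0 \in A. Proof. by case: V. Qed.
Lemma A1 : 1 \in A. Proof. by case: V. Qed.
Lemma AB x y : x \in A -> y \in A -> x - y \in A. Proof. by case: V => _ _ H _ _; apply: H. Qed.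
Lemma AM x y : x \in A -> y \in A -> x * y \in A. Proof. by case: V => _ _ _ H _; apply: H. Qed.
Lemma Adich x : x != 0 -> x \in A \/ x^-1 \in A. Proof. by case: V => _ _ _ _ H; apply: H. Qed.
Lemma AN x : x \in A -> - x \in A. Proof. by move=> h; rewrite -sub0r AB ?A0. Qed.
Lemma AD x y : x \in A -> y \in A -> x + y \in A.
Proof. by move=> hx hy; rewrite -[y]opprK AB ?AN. Qed.
Lemma AX x n : x \in A -> x ^+ n \in A.
Proof. by move=> hx; elim: n => [|n IH]; rewrite ?expr0 ?A1 // exprS AM. Qed.
Lemma Anat n : n%:R \in A.
Proof. by elim: n => [|n IH]; rewrite ?A0 // mulrS AD ?A1. Qed.

Lemma unitP x : unitA A x <-> [&& x \in A, x != 0 & x^-1 \in A].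
Proof. by split => [[-> -> ->]|/and3P]. Qed.

Lemma unit1 : unitA A 1. Proof. by split; rewrite ?A1 ?oner_eq0 ?invr1 ?A1. Qed.

Lemma unitM x y : unitA A x -> unitA A y -> unitA A (x * y).
Proof.
move=> [xA x0 xi] [yA y0 yi]; split; rewrite ?AM ?mulf_neq0 //.
by rewrite invfM AM.
Qed.

Lemma unitV x : unitA A x -> unitA A x^-1.
Proof. by move=> [xA x0 xi]; split; rewrite ?invr_eq0 ?invrK. Qed.

Lemma unitN x : unitA A x -> unitA A (- x).
Proof. by move=> [xA x0 xi]; split; rewrite ?AN ?oppr_eq0 // invrN AN. Qed.

Lemma mA x : maxideal A x -> x \in A. Proof. by case. Qed.

Lemma mE x : maxideal A x <-> x \in A /\ (x = 0 \/ x^-1 \notin A).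
Proof.
split => [[xA nu]|[xA H]].
  split => //; have [->|x0] := eqVneq x 0; first by left.
  by right; apply/negP => xi; apply: nu; split.
by split => // -[_ x0 xi]; case: H => [x00|xn]; [rewrite x00 eqxx in x0 | rewrite xi in xn].
Qed.

Lemma m0 : maxideal A 0.
Proof. by apply/mE; split; [apply: A0 | left]. Qed.

Lemma notA_inv x : x \notin A -> x != 0 /\ maxideal A x^-1.
Proof.
move=> xn; have x0 : x != 0 by apply: contraNneq xn => ->; apply: A0.
split => //; apply/mE; split.
  by case: (Adich x0) => // xA; rewrite xA in xn.
by right; rewrite invrK.
Qed.

Lemma m_ideal a y : a \in A -> maxideal A y -> maxideal A (a * y).
Proof.
move=> aA /mE[yA H]; case: H => [->|yi]; first by rewrite mulr0; apply: m0.
apply/mE; split; first by rewrite AM.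
have [->|a0] := eqVneq a 0; first by left; rewrite mul0r.
right; apply: contra yi => ayi.
by rewrite -[y^-1](mulVKf a0) -invfM AM.
Qed.

Lemma m_add y z : maxideal A y -> maxideal A z -> maxideal A (y + z).
Proof.
move=> my mz.
have [->|y0] := eqVneq y 0; first by rewrite add0r.
have [->|z0] := eqVneq z 0; first by rewrite addr0.
have yz0 : y / z != 0 by rewrite mulf_neq0 ?invr_eq0.
case: (Adich yz0) => [h|].
  have -> : y + z = (y / z + 1) * z by rewrite mulrDl divfK // mul1r.
  by apply: m_ideal => //; rewrite AD ?A1.
rewrite invfM invrK mulrC => h.
have -> : y + z = (z / y + 1) * y by rewrite mulrDl divfK // mul1r addrC.
by apply: m_ideal => //; rewrite AD ?A1.
Qed.

Lemma m_opp y : maxideal A y -> maxideal A (- y).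
Proof. by move=> my; rewrite -mulN1r; apply: m_ideal => //; rewrite AN ?A1. Qed.

Lemma m_notunit x : maxideal A x -> unitA A x -> False.
Proof. by case. Qed.

Lemma unit_addm u y : unitA A u -> maxideal A y -> unitA A (u + y).
Proof.
move=> uu my.
have uyA : u + y \in A by apply: AD; [case: uu | apply: mA].
have uA : u \in A by case: uu.
apply/unitP; apply/andP; split => //.
have [u0|] := boolP (u + y == 0).
  have yu : y = - u by apply/eqP; rewrite -addr_eq0 addrC.
  by exfalso; apply: (m_notunit my); rewrite yu; apply: unitN.
move=> uy0; apply/andP; split => //; apply/negPn/negP => H.
have muy : maxideal A (u + y) by apply/mE; split => //; right.
have : maxideal A (u + y - y) by rewrite /GRing.add; apply: m_add => //; apply: m_opp.
by rewrite addrK => mu; apply: (m_notunit mu).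
Qed.

Lemma A_unit_or_m x : x \in A -> unitA A x \/ maxideal A x.
Proof.
move=> xA; have [->|x0] := eqVneq x 0; first by right; apply: m0.
have [xi|xi] := boolP (x^-1 \in A); first by left.
by right; apply/mE; split => //; right.
Qed.

Lemma trich x : x != 0 -> [\/ unitA A x, maxideal A x | maxideal A x^-1].
Proof.
move=> x0; have [xA|xn] := boolP (x \in A).
  by case: (A_unit_or_m xA) => H; [apply: Or31 | apply: Or32].
by apply: Or33; case: (notA_inv xn).
Qed.


Variable p : nat.
Hypothesis pK : p \in [pchar K].

Lemma p2K : (1 < p)%N.
Proof. by apply: prime_gt1; apply: pcharf_prime pK. Qed.

Lemma frobNK (x : K) : (- x) ^+ p = - x ^+ p.
Proof. by rewrite -!(pFrobenius_autE pK) pFrobenius_autN. Qed.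

Lemma m_exp x n : maxideal A x -> maxideal A (x ^+ n.+1).
Proof. by move=> mx; rewrite exprSr; apply: m_ideal => //; apply: AX; apply: mA. Qed.

Lemma close (f F c w : K) : c != 0 -> unitA A w -> f / c \in A -> F = c * w ->
  F != 0 /\ f / F \in A.
Proof.
move=> c0 [wA w0 wi] fc ->; split; first by rewrite mulf_neq0.
by rewrite invfM mulrA AM.
Qed.

Lemma core (f k : K) :
  ( (f \notin A /\ ~ vdivisible A p f)
    \/ (f \notin A /\
        exists g u : K, [/\ g != 0, maxideal A g, unitA A u, f = u / g ^+ p &
                         ~ (exists x : K, x \in A /\ res_eq A u (x ^+ p))])
    \/ (unitA A f /\ ~ (exists x : K, x \in A /\ res_eq A f (x ^+ p - x))) ) ->
  f + (k ^+ p - k) != 0 /\ f / (f + (k ^+ p - k)) \in A.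
Proof.
move=> H.
have f0 : f != 0.
  case: H => [[fn _]|[[fn _]|[[_ ? _] _]]] //; by case: (notA_inv fn).
have [kA|kn] := boolP (k \in A).
  have tA : k ^+ p - k \in A by rewrite AB ?AX.
  have [fA|fn] := boolP (f \in A); last first.
    have [_ mfi] := notA_inv fn.
    apply: (close (c := f) (w := 1 + (k ^+ p - k) * f^-1)) => //.
    - by apply: unit_addm; [apply: unit1 | apply: m_ideal].
    - by rewrite divff // A1.
    - by rewrite mulrDr mulr1 mulrCA divff // mulr1.
  case: H => [[/negP]|[[/negP]|[fu nx]]] //.
  have FA : f + (k ^+ p - k) \in A by rewrite AD.
  case: (A_unit_or_m FA) => [[_ F0 Fi]|mF].
    by split => //; rewrite AM.
  exfalso; apply: nx; exists (- k); split; first by rewrite AN.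
  split; first by case: fu.
  split; first by apply: AB; [apply: AX|]; apply: AN.
  by rewrite frobNK opprK opprD opprK.
have [k0 mki] := notA_inv kn.
set ki := k^-1 in mki.
have p1 : p = (p - 1).+1 by have := p2K; lia.
have me : maxideal A (ki ^+ (p - 1)).
  have -> : (p - 1 = (p - 2).+1)%N by have := p2K; lia.
  by apply: m_exp.
have kiA : ki \in A by apply: mA.
have u1u : unitA A (1 - ki ^+ (p - 1)) by apply: unit_addm; [apply: unit1|apply: m_opp].
have kp0 : k ^+ p != 0 by rewrite expf_neq0.
have Ekk : k ^+ p * ki ^+ (p - 1) = k.
  by rewrite {1}p1 exprS -mulrA -exprMn /ki divff // expr1n mulr1.
set u1 := 1 - ki ^+ (p - 1) in u1u.
have Et : k ^+ p - k = k ^+ p * u1 by rewrite /u1 mulrBr mulr1 Ekk.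
set r := f / k ^+ p.
have r0 : r != 0 by rewrite /r mulf_neq0 ?invr_eq0.
have EF : f + (k ^+ p - k) = k ^+ p * (r + u1).
  by rewrite Et /r; field.
have [ru|rm|rim] := trich r0.
- case: H => [[fn nd]|[[fn [g [u [g0 mg uu Ef nx]]]]|[[fA _ _] _]]].
  + by exfalso; apply: nd; exists k; split.
  + apply: (close (c := k ^+ p) (w := r + u1)) => //; last by case: ru.
    have rwA : r + u1 \in A by apply: AD; [case: ru | case: u1u].
    case: (A_unit_or_m rwA) => // mr; exfalso; apply: nx.
    set w := g * k.
    have w0 : w != 0 by rewrite mulf_neq0.
    have wp0 : w ^+ p != 0 by rewrite expf_neq0.
    have u0 : u != 0 by case: uu.
    have Er : r = u / w ^+ p by rewrite /r Ef /w exprMn invfM mulrA.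
    have wA : w \in A.
      apply/negPn/negP => wn; have [_ mwi] := notA_inv wn.
      have := m_exp (p - 1) mwi; rewrite -p1 exprVn => mw.
      apply: (m_notunit mw).
      have -> : (w ^+ p)^-1 = r / u by rewrite Er mulrC mulrA mulVf // mul1r.
      by apply: unitM => //; apply: unitV.
    exists (- w); split; first by apply: AN.
    split; first by case: uu.
    split; first by apply: AX; apply: AN.
    rewrite frobNK opprK.
    have -> : u + w ^+ p = w ^+ p * ((r + u1) + ki ^+ (p - 1)).
      by rewrite /u1 Er; field.
    by apply: m_ideal; [apply: AX | apply: m_add].
  + exfalso; apply: (m_notunit _ ru).
    have -> : r = f * ki ^+ p by rewrite /r /ki exprVn.
    by apply: m_ideal => //; rewrite p1; apply: m_exp.
- apply: (close (c := k ^+ p) (w := r + u1)) => //; last by apply: mA.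
  by rewrite addrC; apply: unit_addm.
- apply: (close (c := f) (w := 1 + u1 * r^-1)) => //.
  + by apply: unit_addm; [apply: unit1 | apply: m_ideal => //; case: u1u].
  + by rewrite divff // A1.
  + rewrite Et /r; field; by rewrite kp0 f0.
Qed.
End Valuation.

Theorem corollary3p2p4 (p : nat) (K : fieldType) (A : {pred K})
  (L : fieldExtType K) (f : K) :
  prime p -> p \in [pchar K] ->
  is_valuation_ring A -> henselian A -> not_field A ->
  (1 < \dim (fullv : {vspace L}))%N ->
  AS_generates L p f ->
  ( (f \notin A /\ ~ vdivisible A p f)
    \/ (f \notin A /\
        exists g u : K, [/\ g != 0, maxideal A g, unitA A u, f = u / g ^+ p &
                         ~ (exists x : K, x \in A /\ res_eq A u (x ^+ p))])
    \/ (unitA A f /\ ~ (exists x : K, x \in A /\ res_eq A f (x ^+ p - x))) ) ->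
  AS_best A L p f.
Proof.
move=> pr pK V _ _ Hdim [a [Ha Hgen]] H f' [b [Hb Hgb]].
have [j [h [/andP[j0 jp] Ef']]] := AS_rel pK Ha Hgen Hdim Hb Hgb.
have jn : (j%:R : K) != 0.
  by rewrite -(dvdn_pcharf pK); apply/negP => /(dvdn_leq j0); lia.
have jpj : (j%:R : K) ^+ p = j%:R by rewrite -(pFrobenius_autE pK) pFrobenius_aut_nat.
set k := h / j%:R.
have Ef'' : f' = j%:R * (f + (k ^+ p - k)).
  by rewrite Ef' /k exprMn exprVn jpj; field.
have [F0 FA] := core V pK k H.
have ji : (j%:R : K)^-1 \in A.
  case: (A_unit_or_m V (Anat V j)) => [[_ _ //]| mj].
  exfalso; suff [_ m1] : maxideal A 1 by apply: m1; apply: unit1.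
  have p1 : p = (p - 2).+2 by have := p2K pK; lia.
  have E1 : (j%:R : K) ^+ (p - 2).+1 = 1.
    apply: (mulIf jn); rewrite mul1r -exprSr -p1 //.
  by rewrite -E1; apply: m_exp.
right; split; first by rewrite Ef'' mulf_neq0.
by rewrite Ef'' invfM mulrCA; apply: AM.
Qed.
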